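(* Let $p\geq p_F(\sigma)=m+\frac{\sigma+2}{N}$ and let $(X,Y,Z)(\eta)$ be a trajectory of system (S1) such that there is $\eta_*\in\mathbb{R}$ with $X(\eta_* )>0$, $Z(\eta_* )>0$ and $$-\frac{\beta}{\alpha}<Y(\eta)<0\qquad\text{for all }\eta>\eta_*.$$ Then, as $\eta\to\infty$, the trajectory converges either to $P_1=(0,0,0)$ or to $P_{\gamma_0}=(0,0,\gamma_0)$ with $\gamma_0=\frac{1}{\alpha(p-1)}$. Moreover, in the region $\{X>0,Z>0\}$ the flow of (S1) across the plane $\{Y=-\beta/\alpha\}$ points towards $\{Y>-\beta/\alpha\}$, so no trajectory with $X>0$, $Z>0$ crosses this plane from $\{Y>-\beta/\alpha\}$ to $\{Y<-\beta/\alpha\}$.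
   Context: Let $N\geq1$, $m>1$, $\sigma>0$, $p>m$, $L=\sigma(m-1)+2(p-1)$, $\alpha=(\sigma+2)/L$, $\beta=(p-m)/L$ (so $\beta/\alpha=(p-m)/(\sigma+2)$). System (S1) is $$\dot X=X[(m-1)Y-2X],\quad \dot Y=-Y^2-\tfrac{p-m}{\sigma+2}Y-X-NXY+XZ,\quad \dot Z=Z[(p-1)Y+\sigma X],$$ obtained from profiles $f>0$ of $(f^m)''+\frac{N-1}{\xi}(f^m)'+\alpha f+\beta\xi f'-\xi^\sigma f^p=0$ via $X=\frac{m}{\alpha}\xi^{-2}f^{m-1}$, $Y=\frac{m}{\alpha}\xi^{-1}f^{m-2}f'$, $Z=\frac1\alpha\xi^\sigma f^{p-1}$. *)

(* Defs.v *)
From Stdlib Require Import Reals.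
From Coquelicot Require Import Coquelicot.
Open Scope R_scope.

Definition Lpar (m sigma p : R) : R := sigma * (m - 1) + 2 * (p - 1).
Definition alpha (m sigma p : R) : R := (sigma + 2) / Lpar m sigma p.
Definition beta (m sigma p : R) : R := (p - m) / Lpar m sigma p.
Definition gamma0 (m sigma p : R) : R := 1 / (alpha m sigma p * (p - 1)).
Definition pF (N : nat) (m sigma : R) : R := m + (sigma + 2) / INR N.

Definition S1_X (N : nat) (m sigma p x y z : R) : R := x * ((m - 1) * y - 2 * x).
Definition S1_Y (N : nat) (m sigma p x y z : R) : R :=
  - y ^ 2 - (p - m) / (sigma + 2) * y - x - INR N * x * y + x * z.
Definition S1_Z (N : nat) (m sigma p x y z : R) : R := z * ((p - 1) * y + sigma * x).

Definition S1_solution_from (N : nat) (m sigma p : R) (X Y Z : R -> R) (eta0 : R) : Prop :=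
  forall eta, eta0 <= eta ->
    is_derive X eta (S1_X N m sigma p (X eta) (Y eta) (Z eta)) /\
    is_derive Y eta (S1_Y N m sigma p (X eta) (Y eta) (Z eta)) /\
    is_derive Z eta (S1_Z N m sigma p (X eta) (Y eta) (Z eta)).

Definition converges_to (X Y Z : R -> R) (a b c : R) : Prop :=
  is_lim X p_infty a /\ is_lim Y p_infty b /\ is_lim Z p_infty c.

(* Main.v *)
Require Import Defs.
From Stdlib Require Import Reals Lra Psatz Classical.
From Coquelicot Require Import Coquelicot.
Open Scope R_scope.

Lemma deriv_loc (f : R -> R) x l : is_derive f x l ->
  forall eps, 0 < eps -> exists del, 0 < del /\
    forall h, Rabs h < del -> Rabs (f (x + h) - f x - h * l) <= eps * Rabs h.
Proof.
  intros Hd eps He. apply is_derive_Reals in Hd.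
  destruct (Hd eps He) as [del Hdel].
  exists del; split; [apply cond_pos|]. intros h Hh.
  destruct (Req_dec h 0) as [->|Hn].
  { rewrite Rplus_0_r, Rabs_R0. replace (f x - f x - 0 * l) with 0 by ring. rewrite Rabs_R0; lra. }
  specialize (Hdel h Hn Hh).
  replace (f (x + h) - f x - h * l) with (h * ((f (x + h) - f x) / h - l)) by (field; auto).
  rewrite Rabs_mult, Rmult_comm. apply Rmult_le_compat_r; [apply Rabs_pos|lra].
Qed.

Lemma deriv_cont (f : R -> R) x l : is_derive f x l ->
  forall eps, 0 < eps -> exists del, 0 < del /\
    forall y, Rabs (y - x) < del -> Rabs (f y - f x) < eps.
Proof.
  intros Hd eps He. destruct (deriv_loc f x l Hd 1 Rlt_0_1) as [del [Hdel H]].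
  exists (Rmin del (eps / (Rabs l + 1))). split.
  { apply Rmin_pos; auto. apply Rdiv_lt_0_compat; auto. pose proof (Rabs_pos l); lra. }
  intros y Hy. specialize (H (y - x)). replace (x + (y - x)) with y in H by ring.
  assert (Hy1 : Rabs (y - x) < del) by (eapply Rlt_le_trans; [exact Hy|apply Rmin_l]).
  assert (Hy2 : Rabs (y - x) < eps / (Rabs l + 1)) by (eapply Rlt_le_trans; [exact Hy|apply Rmin_r]).
  specialize (H Hy1).
  pose proof (Rabs_pos l).
  assert (Rabs (f y - f x) <= Rabs (y - x) * (Rabs l + 1)).
  { replace (f y - f x) with ((f y - f x - (y - x) * l) + (y - x) * l) by ring.
    eapply Rle_trans; [apply Rabs_triang|]. rewrite Rabs_mult. lra. }
  apply Rlt_div_r in Hy2; [|lra]. lra.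
Qed.

Lemma barrier (f df : R -> R) (a c : R) :
  (forall t, a <= t -> is_derive f t (df t)) ->
  c < f a ->
  (forall t, a < t -> f t = c -> 0 < df t) ->
  forall t, a <= t -> c < f t.
Proof.
  intros Hd Ha Hc t Ht.
  destruct (Rlt_or_le c (f t)) as [H|Hle]; auto. exfalso.
  set (E := fun s => a <= s <= t /\ forall u, a <= u <= s -> c < f u).
  assert (HEa : E a) by (split; [lra| intros u Hu; replace u with a by lra; auto]).
  assert (Hb : bound E) by (exists t; intros s [Hs _]; lra).
  destruct (completeness E Hb (ex_intro _ a HEa)) as [s0 [Hub Hlub]].
  assert (Has0 : a <= s0) by (apply Hub; auto).
  assert (Hs0t : s0 <= t) by (apply Hlub; intros s [Hs _]; lra).
  assert (Key : forall u, a <= u < s0 -> c < f u).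
  { intros u Hu. destruct (Rlt_or_le c (f u)) as [|Hfu]; auto. exfalso.
    assert (is_upper_bound E u).
    { intros s [Hs Hs2]. destruct (Rle_lt_dec s u); auto.
      specialize (Hs2 u ltac:(lra)); lra. }
    specialize (Hlub u H); lra. }
  assert (Hd0 := Hd s0 Has0).
  assert (Hge : c <= f s0).
  { destruct (Rle_lt_dec c (f s0)) as [|Hlt]; auto. exfalso.
    destruct (Req_dec s0 a) as [->|Hne]; [lra|].
    destruct (deriv_cont f s0 _ Hd0 (c - f s0) ltac:(lra)) as [del [Hdel Hcn]].
    set (u := s0 - Rmin (del/2) ((s0 - a)/2)).
    assert (Hm1 : 0 < Rmin (del/2) ((s0 - a)/2)) by (apply Rmin_pos; lra).
    assert (Hm2 : Rmin (del/2) ((s0 - a)/2) <= del/2) by apply Rmin_l.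
    assert (Hm3 : Rmin (del/2) ((s0 - a)/2) <= (s0-a)/2) by apply Rmin_r.
    specialize (Key u ltac:(unfold u; lra)).
    specialize (Hcn u). assert (Rabs (u - s0) < del).
    { unfold u. rewrite Rabs_left; lra. }
    specialize (Hcn H). apply Rabs_lt_between in Hcn. lra. }
  destruct (Req_dec (f s0) c) as [Heq|Hneq].
  -
    destruct (Req_dec s0 a) as [->|Hne]; [lra|].
    assert (Hpos := Hc s0 ltac:(lra) Heq).
    destruct (deriv_loc f s0 _ Hd0 (df s0 / 2) ltac:(lra)) as [del [Hdel Hl]].
    set (h := - Rmin (del/2) ((s0 - a)/2)).
    assert (Hm1 : 0 < Rmin (del/2) ((s0 - a)/2)) by (apply Rmin_pos; lra).
    assert (Hm2 : Rmin (del/2) ((s0 - a)/2) <= del/2) by apply Rmin_l.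
    assert (Hm3 : Rmin (del/2) ((s0 - a)/2) <= (s0-a)/2) by apply Rmin_r.
    specialize (Key (s0 + h) ltac:(unfold h; lra)).
    specialize (Hl h). assert (Rabs h < del) by (unfold h; rewrite Rabs_left; lra).
    specialize (Hl H). assert (Habs : Rabs h = - h) by (unfold h; apply Rabs_left; lra).
    rewrite Habs in Hl.
    assert (Hh0 : h < 0) by (unfold h; lra).
    assert (f (s0 + h) - f s0 - h * df s0 <= df s0 / 2 * - h) by (eapply Rle_trans; [apply Rle_abs|exact Hl]).
    nra.
  - assert (Hgt : c < f s0) by lra.
    assert (Hst : s0 < t) by (destruct (Req_dec s0 t) as [->|]; lra).
    destruct (deriv_cont f s0 _ Hd0 (f s0 - c) ltac:(lra)) as [del [Hdel Hcn]].
    set (s1 := s0 + Rmin (del/2) ((t - s0)/2)).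
    assert (Hm1 : 0 < Rmin (del/2) ((t - s0)/2)) by (apply Rmin_pos; lra).
    assert (Hm2 : Rmin (del/2) ((t - s0)/2) <= del/2) by apply Rmin_l.
    assert (Hm3 : Rmin (del/2) ((t - s0)/2) <= (t-s0)/2) by apply Rmin_r.
    assert (E s1).
    { split; [unfold s1; lra|]. intros u Hu.
      destruct (Rlt_or_le u s0). { apply Key; lra. }
      specialize (Hcn u). assert (Rabs (u - s0) < del).
      { rewrite Rabs_right; unfold s1 in Hu; lra. }
      specialize (Hcn H0). apply Rabs_lt_between in Hcn. lra. }
    specialize (Hub s1 H). unfold s1 in Hub. lra.
Qed.

Lemma barrier_dn (f df : R -> R) (a c : R) :
  (forall t, a <= t -> is_derive f t (df t)) ->
  f a < c ->
  (forall t, a < t -> f t = c -> df t < 0) ->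
  forall t, a <= t -> f t < c.
Proof.
  intros Hd Ha Hc t Ht.
  assert (H := barrier (fun s => - f s) (fun s => - df s) a (- c)).
  cut (- c < - f t); [lra|]. apply H; [ | lra | | exact Ht].
  - intros s Hs. apply (is_derive_opp f s (df s)). auto.
  - intros s Hs Hfs. assert (df s < 0) by (apply Hc; auto; lra). lra.
Qed.

Lemma mono (f df : R -> R) (a b : R) : a <= b ->
  (forall t, a <= t <= b -> is_derive f t (df t)) ->
  (forall t, a < t < b -> 0 <= df t) -> f a <= f b.
Proof.
  intros Hab Hd Hp.
  destruct (Req_dec a b) as [->|Hne]; [lra|].
  destruct (MVT_cor2 f df a b) as [c [Heq Hc]]; [lra| |].
  - intros c Hc. apply is_derive_Reals, Hd; lra.
  - specialize (Hp c Hc). nra.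
Qed.

Lemma deriv_eq (f : R -> R) x l l' : is_derive f x l -> l = l' -> is_derive f x l'.
Proof. intros H ->; exact H. Qed.

Lemma lim_of_bound (f : R -> R) (l : R) :
  (forall eps, 0 < eps -> exists M, forall t, M < t -> Rabs (f t - l) < eps) ->
  is_lim f p_infty l.
Proof.
  intros H. apply is_lim_spec. intros eps. destruct (H eps (cond_pos eps)) as [M HM].
  exists M. auto.
Qed.


Lemma d_exp (c K a t : R) :
  is_derive (fun s => c * exp (- K * (s - a))) t (- (c * K) * exp (- K * (t - a))).
Proof. auto_derive; auto. unfold Rminus; ring. Qed.

Lemma d_minus (f g : R -> R) x df dg : is_derive f x df -> is_derive g x dg ->
  is_derive (fun s => f s - g s) x (df - dg).
Proof. intros H1 H2. apply (is_derive_minus f g x df dg H1 H2). Qed.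
Lemma d_plus (f g : R -> R) x df dg : is_derive f x df -> is_derive g x dg ->
  is_derive (fun s => f s + g s) x (df + dg).
Proof. intros H1 H2. apply (is_derive_plus f g x df dg H1 H2). Qed.
Lemma d_mult (f g : R -> R) x df dg : is_derive f x df -> is_derive g x dg ->
  is_derive (fun s => f s * g s) x (df * g x + f x * dg).
Proof. intros H1 H2. apply (is_derive_mult f g x df dg H1 H2). intros; apply Rmult_comm. Qed.
Lemma d_scal (f : R -> R) x k df : is_derive f x df ->
  is_derive (fun s => k * f s) x (k * df).
Proof. apply is_derive_scal. Qed.
Lemma d_inv (f : R -> R) x df : is_derive f x df -> f x <> 0 ->
  is_derive (fun s => / f s) x (- df / f x ^ 2).
Proof. apply is_derive_inv. Qed.
Lemma d_ln (f : R -> R) x df : is_derive f x df -> 0 < f x ->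
  is_derive (fun s => ln (f s)) x (df / f x).
Proof. intros H Hp. eapply deriv_eq. apply (is_derive_comp ln f x (/ f x) df).
  apply is_derive_ln; auto. auto. simpl. unfold scal; simpl; unfold mult; simpl. field; lra. Qed.
Lemma d_id x : is_derive (fun s => s) x 1.
Proof. auto_derive; auto. Qed.
Lemma d_const (k : R) x : is_derive (fun _ => k) x 0.
Proof. auto_derive; auto. Qed.

Lemma unbounded_growth (F dF : R -> R) (t1 x c2 kap : R) : 0 < x -> 0 < c2 -> 0 < kap ->
  (forall s, t1 <= s -> is_derive F s (dF s)) ->
  (forall s, t1 <= s -> kap / (x + c2*(s - t1)) <= dF s) ->
  forall B, exists T, t1 <= T /\ forall s, T <= s -> B < F s.
Proof.
  intros Hx Hc Hk Hd Hb B.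
  set (L := ln x + (c2/kap)*(B - F t1)).
  assert (HeL := exp_pos L).
  exists (t1 + exp L / c2). split.
  { assert (0 < exp L / c2) by (apply Rdiv_lt_0_compat; lra). lra. }
  intros s Hs.
  assert (0 < exp L / c2) by (apply Rdiv_lt_0_compat; lra).
  assert (Hq : exp L <= c2 * (s - t1)).
  { assert (c2 * (exp L / c2) = exp L) by (field; lra).
    assert (exp L / c2 <= s - t1) by lra. nra. }
  assert (Hpos : forall u, t1 <= u -> 0 < x + c2 * (u - t1)) by (intros; nra).
  assert (Hm : F t1 - (kap/c2) * ln (x + c2*(t1 - t1)) <= F s - (kap/c2) * ln (x + c2*(s - t1))).
  { apply (mono (fun u => F u - (kap/c2) * ln (x + c2*(u - t1)))
      (fun u => dF u - (kap/c2) * (c2 / (x + c2*(u - t1)))) t1 s); [lra| |].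
    - intros u Hu. apply d_minus. apply Hd; lra. apply d_scal.
      apply (d_ln (fun u => x + c2 * (u - t1))). auto_derive; auto; ring. apply Hpos; lra.
    - intros u Hu. specialize (Hb u ltac:(lra)). specialize (Hpos u ltac:(lra)).
      assert (x + c2 * (u - t1) <> 0) by lra. assert (c2 <> 0) by lra.
      replace (kap / c2 * (c2 / (x + c2 * (u - t1)))) with (kap / (x + c2*(u - t1))) by (field; auto).
      lra. }
  replace (x + c2 * (t1 - t1)) with x in Hm by ring.
  assert (Hln : L < ln (x + c2 * (s - t1))).
  { rewrite <- (ln_exp L) at 1. apply ln_increasing; lra. }
  unfold L in Hln.
  assert (kap / c2 * (c2 / kap * (B - F t1)) = B - F t1) by (field; lra).
  assert (0 < kap / c2) by (apply Rdiv_lt_0_compat; lra).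
  nra.
Qed.

Lemma lim_inv_lin (f : R -> R) (l t0 x0 A : R) : 0 < x0 -> 0 <= A ->
  (forall t, t0 <= t -> Rabs (f t - l) * (x0 + 2*(t - t0)) <= A) -> is_lim f p_infty l.
Proof.
  intros Hx HA H. apply lim_of_bound. intros eps He. exists (t0 + A/eps). intros t Ht.
  assert (Hq : 0 <= A / eps) by (apply Rmult_le_pos; [lra|left; apply Rinv_0_lt_compat; lra]).
  assert (Hq2 : eps * (A / eps) = A) by (field; lra).
  specialize (H t ltac:(lra)).
  destruct (Rlt_or_le (Rabs (f t - l)) eps) as [|Hge]; auto. exfalso.
  assert (Hd : A / eps < x0 + 2 * (t - t0)) by lra.
  assert (eps * (A/eps) < eps * (x0 + 2 * (t - t0))) by (apply Rmult_lt_compat_l; lra).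
  assert (eps * (x0 + 2 * (t - t0)) <= Rabs (f t - l) * (x0 + 2 * (t - t0))) by (apply Rmult_le_compat_r; lra).
  lra.
Qed.
Lemma exp_le1 x : x <= 0 -> exp x <= 1.
Proof. intros H. rewrite <- exp_0. destruct (Req_dec x 0) as [->|]; [lra|]. left; apply exp_increasing; lra. Qed.

Lemma main1 (N : nat) (m sigma p b g0 : R) (X Y Z : R -> R) (a : R)
 (Hm : 1 < m) (Hsg : 0 < sigma) (Hp1 : 1 < p) (Hb : 0 < b) (HNb : 1 <= INR N * b)
 (Hg0 : g0 = 1 - sigma * b / (p - 1)) (Hg0p : 0 < g0)
 (HdX : forall t, a <= t -> is_derive X t (X t * ((m-1)*Y t - 2*X t)))
 (HdY : forall t, a <= t -> is_derive Y t (-(Y t)^2 - b*Y t - X t - INR N * X t * Y t + X t * Z t))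
 (HdZ : forall t, a <= t -> is_derive Z t (Z t * ((p-1)*Y t + sigma*X t)))
 (HX0 : 0 < X a) (HZ0 : 0 < Z a) (HY : forall t, a < t -> -b < Y t /\ Y t < 0) :
 (is_lim X p_infty 0 /\ is_lim Y p_infty 0 /\ is_lim Z p_infty 0) \/
 (is_lim X p_infty 0 /\ is_lim Y p_infty 0 /\ is_lim Z p_infty g0).
Proof.
  set (Nr := INR N) in *.
  assert (HNr : 0 < Nr) by (destruct (Rle_lt_dec Nr 0); [nra|auto]).
  assert (HXpos : forall t, a <= t -> 0 < X t).
  { set (c := X a / 2). set (K := (m-1)*b + 2*c + 1).
    assert (HK : 0 < K) by (unfold K, c; nra).
    intros t Ht.
    cut (0 < X t - c * exp (-K*(t-a))). { intros; pose proof (exp_pos (-K*(t-a))); unfold c in *; nra. }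
    apply (barrier (fun s => X s - c * exp (-K*(s-a)))
      (fun s => X s * ((m-1)*Y s - 2*X s) - (-(c*K)*exp(-K*(s-a)))) a 0); auto.
    - intros s Hs'. apply d_minus; [apply HdX; auto | apply d_exp].
    - replace (a - a) with 0 by ring. rewrite Rmult_0_r, exp_0. unfold c; lra.
    - intros s Hs' Heq. destruct (HY s Hs') as [Y1 Y2].
      assert (He1 : exp (-K*(s-a)) <= 1) by (apply exp_le1; nra).
      assert (He0 := exp_pos (-K*(s-a))).
      assert (HXs : X s = c * exp (-K*(s-a))) by lra.
      rewrite HXs. set (e := exp (-K*(s-a))) in *.
      assert (Hc : 0 < c) by (unfold c; lra).
      assert (0 < c * e) by nra.
      assert ((m-1)*Y s - 2*(c*e) + K > 0) by (unfold K; nra).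
      nra. }
  assert (HZpos : forall t, a <= t -> 0 < Z t).
  { set (c := Z a / 2). set (K := (p-1)*b + 1).
    assert (HK : 0 < K) by (unfold K; nra).
    intros t Ht.
    cut (0 < Z t - c * exp (-K*(t-a))). { intros; pose proof (exp_pos (-K*(t-a))); unfold c in *; nra. }
    apply (barrier (fun s => Z s - c * exp (-K*(s-a)))
      (fun s => Z s * ((p-1)*Y s + sigma*X s) - (-(c*K)*exp(-K*(s-a)))) a 0); auto.
    - intros s Hs'. apply d_minus; [apply HdZ; auto | apply d_exp].
    - replace (a - a) with 0 by ring. rewrite Rmult_0_r, exp_0. unfold c; lra.
    - intros s Hs' Heq. destruct (HY s Hs') as [Y1 Y2].
      assert (He0 := exp_pos (-K*(s-a))).
      assert (HZs : Z s = c * exp (-K*(s-a))) by lra.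
      rewrite HZs. set (e := exp (-K*(s-a))) in *.
      assert (Hc : 0 < c) by (unfold c; lra).
      assert (0 < c * e) by nra.
      assert (HXs := HXpos s ltac:(lra)).
      assert ((p-1)*Y s + sigma * X s + K > 0) by (unfold K; nra).
      nra. }
  assert (HinvX : forall t0 t, a <= t0 -> t0 <= t -> / X t0 + 2 * (t - t0) <= / X t).
  { intros t0 t Ht0 Ht.
    cut ((/ X t0 - 2 * t0) <= (/ X t - 2 * t)); [lra|].
    apply (mono (fun s => / X s - 2 * s)
      (fun s => - (X s * ((m-1)*Y s - 2*X s)) / X s ^ 2 - 2 * 1) t0 t); auto.
    - intros s Hs. apply d_minus. apply d_inv. apply HdX; lra.
      assert (0 < X s) by (apply HXpos; lra). lra.
      apply d_scal, d_id.
    - intros s Hs. assert (Hx := HXpos s ltac:(lra)). destruct (HY s ltac:(lra)) as [Y1 Y2].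
      replace (- (X s * ((m-1)*Y s - 2*X s)) / X s ^ 2 - 2 * 1) with ((m-1) * (- Y s) / X s) by (field; lra).
      apply Rmult_le_pos; [nra|]. left; apply Rinv_0_lt_compat; lra. }
  assert (HXsmall : forall eps, 0 < eps -> forall t, a + / eps <= t -> X t < eps).
  { intros eps He t Ht. assert (Hx := HXpos t ltac:(pose proof (Rinv_0_lt_compat eps He); lra)).
    assert (H1 := HinvX a t ltac:(lra) ltac:(pose proof (Rinv_0_lt_compat eps He); lra)).
    assert (Hxa := Rinv_0_lt_compat _ HX0).
    assert (HXi : X t * / X t = 1) by (field; lra).
    assert (Hei : eps * / eps = 1) by (field; lra).
    assert (0 < / eps) by (apply Rinv_0_lt_compat; lra).
    assert (/ eps < / X t) by lra.
    nra. }
  set (a1 := a + 1).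
  assert (HY1 : forall t, a1 <= t -> -b < Y t /\ Y t < 0) by (intros t Ht; apply HY; unfold a1 in Ht; lra).
  set (M0 := Rmax (Z a1 - 2*sigma*Y a1) (2 + 2*sigma*b) + 1).
  assert (HM0 : 3 + 2*sigma*b <= M0) by (unfold M0; pose proof (Rmax_r (Z a1 - 2*sigma*Y a1) (2 + 2*sigma*b)); lra).
  assert (HZb : forall t, a1 <= t -> Z t < M0).
  { intros t Ht.
    cut (Z t - 2*sigma*Y t < M0). { destruct (HY1 t Ht). nra. }
    apply (barrier_dn (fun s => Z s - 2*sigma*Y s)
      (fun s => Z s * ((p-1)*Y s + sigma*X s) - 2*sigma*(-(Y s)^2 - b*Y s - X s - Nr * X s * Y s + X s * Z s)) a1 M0); auto.
    - intros s Hs. apply d_minus. apply HdZ; unfold a1 in Hs; lra.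
      replace (2 * sigma * (-(Y s)^2 - b*Y s - X s - Nr * X s * Y s + X s * Z s))
        with (2 * sigma * ((-(Y s)^2 - b*Y s - X s - Nr * X s * Y s + X s * Z s))) by ring.
      apply d_scal. apply HdY; unfold a1 in Hs; lra.
    - unfold M0. pose proof (Rmax_l (Z a1 - 2*sigma*Y a1) (2 + 2*sigma*b)); lra.
    - intros s Hs Heq. destruct (HY1 s ltac:(lra)) as [Y1 Y2].
      assert (Hx := HXpos s ltac:(unfold a1 in Hs; lra)).
      assert (Hz := HZpos s ltac:(unfold a1 in Hs; lra)).
      assert (HZ3 : 3 < Z s) by nra.
      assert (Z s * ((p-1) * Y s) < 0) by (apply Rmult_pos_neg; nra).
      assert (2*sigma * (Y s * (Y s + b)) < 0) by (apply Rmult_pos_neg; nra).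
      assert (2*sigma*Nr * X s * Y s < 0) by (assert (0 < 2*sigma*Nr*X s) by (repeat apply Rmult_lt_0_compat; lra); nra).
      assert (sigma * X s * (2 - Z s) < 0) by (assert (0 < sigma * X s) by nra; nra).
      nra. }
  assert (HdYid : forall t, -(Y t)^2 - b*Y t - X t - Nr * X t * Y t + X t * Z t
            = (Y t + b) * (- Y t - Nr * X t) + X t * (Z t + Nr * b - 1)) by (intros; ring).
  set (del := b / (4*m)).
  assert (Hdel : 0 < del < b) by (unfold del; split; [apply Rdiv_lt_0_compat; lra|];
     apply Rlt_div_l; nra).
  assert (Hmdel : m * del = b / 4) by (unfold del; field; lra).
  set (eps := Rmin (del / (2*Nr)) (b/8)).
  assert (Heps : 0 < eps) by (unfold eps; apply Rmin_pos; [apply Rdiv_lt_0_compat|]; lra).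
  assert (He1 : 2 * Nr * eps <= del).
  { assert (eps <= del / (2*Nr)) by apply Rmin_l.
    assert (2*Nr*(del/(2*Nr)) = del) by (field; lra). nra. }
  assert (He2 : eps <= b/8) by apply Rmin_r.
  set (T0 := a1 + / eps).
  assert (Hinve : 0 < / eps) by (apply Rinv_0_lt_compat; lra).
  assert (HT0 : a1 <= T0) by (unfold T0; lra).
  assert (HXT0 : forall t, T0 <= t -> X t < eps) by (intros t Ht; apply HXsmall; auto; unfold T0, a1 in *; lra).
  assert (HNX : forall t, T0 <= t -> Nr * X t < del / 2) by (intros t Ht; specialize (HXT0 t Ht); nra).
  assert (Hstep4 : exists t0, T0 <= t0 /\ forall t, t0 <= t -> -del < Y t).
  { destruct (classic (exists t1, T0 <= t1 /\ -del < Y t1)) as [[t1 [Ht1 Hyt1]]|Hno].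
    - exists t1. split; auto. intros t Ht.
      apply (barrier Y (fun s => -(Y s)^2 - b*Y s - X s - Nr * X s * Y s + X s * Z s) t1 (-del)); auto.
      + intros s Hs. apply HdY. unfold T0, a1 in *; lra.
      + intros s Hs Heq. rewrite HdYid, Heq.
        assert (Hx := HXpos s ltac:(unfold T0, a1 in *; lra)).
        assert (Hz := HZpos s ltac:(unfold T0, a1 in *; lra)).
        assert (Hn := HNX s ltac:(lra)).
        assert (0 < X s * (Z s + Nr * b - 1)) by (apply Rmult_lt_0_compat; lra).
        assert (0 < (- del + b) * (- - del - Nr * X s)) by (apply Rmult_lt_0_compat; lra).
        lra.
    - exfalso.
      assert (Hle : forall t, T0 <= t -> Y t <= - del).
      { intros t Ht. destruct (Rle_lt_dec (Y t) (-del)); auto. exfalso; apply Hno; eauto. }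
      assert (Hdpos : forall s, T0 <= s -> (Y s + b) * (- Y s - Nr * X s) >= 0 /\
                 -(Y s)^2 - b*Y s - X s - Nr * X s * Y s + X s * Z s >= (Y s + b) * (- Y s - Nr * X s)).
      { intros s Hs. rewrite HdYid.
        assert (Hx := HXpos s ltac:(unfold T0, a1 in *; lra)).
        assert (Hz := HZpos s ltac:(unfold T0, a1 in *; lra)).
        destruct (HY1 s ltac:(lra)). specialize (Hle s Hs). specialize (HNX s Hs).
        split; [|assert (0 <= X s * (Z s + Nr * b - 1)) by (apply Rmult_le_pos; lra); lra].
        apply Rle_ge, Rmult_le_pos; lra. }
      assert (Hinc : forall t, T0 <= t -> Y T0 <= Y t).
      { intros t Ht. apply (mono Y (fun s => -(Y s)^2 - b*Y s - X s - Nr * X s * Y s + X s * Z s) T0 t); auto.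
        - intros s Hs. apply HdY. unfold T0, a1 in *; lra.
        - intros s Hs. destruct (Hdpos s ltac:(lra)). lra. }
      set (d := Y T0 + b).
      assert (Hd : 0 < d) by (unfold d; destruct (HY1 T0 HT0); lra).
      set (t := T0 + 2 * b / (d * del) + 1).
      assert (Hq : 0 < 2 * b / (d * del)) by (apply Rdiv_lt_0_compat; nra).
      assert (Hmono := mono (fun s => Y s - (d * del / 2) * s)
          (fun s => (-(Y s)^2 - b*Y s - X s - Nr * X s * Y s + X s * Z s) - (d*del/2) * 1) T0 t).
      assert (Hyt : Y T0 - (d * del / 2) * T0 <= Y t - (d * del / 2) * t).
      { apply Hmono; [unfold t; lra| |].
        - intros s Hs. apply d_minus. apply HdY. unfold T0, a1 in *; lra. apply d_scal, d_id.
        - intros s Hs. destruct (Hdpos s ltac:(lra)) as [_ H2].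
          assert (Hx := HXpos s ltac:(unfold T0, a1 in *; lra)).
          specialize (Hinc s ltac:(lra)). specialize (Hle s ltac:(lra)). specialize (HNX s ltac:(lra)).
          assert (0 <= (Y s + b - d) * (- Y s - Nr * X s)) by (apply Rmult_le_pos; unfold d; lra).
          assert (0 <= d * (- Y s - Nr * X s - del/2)) by (apply Rmult_le_pos; lra).
          nra. }
      assert (Hkey : (d * del / 2) * (t - T0) > b).
      { unfold t. replace (T0 + 2 * b / (d * del) + 1 - T0) with (2 * b / (d * del) + 1) by ring.
        replace (d * del / 2 * (2 * b / (d * del) + 1)) with (b + d * del / 2) by (field; nra). nra. }
      destruct (HY1 t ltac:(unfold t; lra)). unfold d in *. nra. }
  destruct Hstep4 as [t0 [Ht0 HYdel]].
  assert (Ht0a : a1 <= t0) by lra.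
  assert (HXp : forall t, t0 <= t -> 0 < X t) by (intros t Ht; apply HXpos; unfold a1 in *; lra).
  assert (HZp : forall t, t0 <= t -> 0 < Z t) by (intros t Ht; apply HZpos; unfold a1 in *; lra).
  assert (HYb : forall t, t0 <= t -> -b < Y t /\ Y t < 0) by (intros t Ht; apply HY1; lra).
  assert (HXe : forall t, t0 <= t -> X t < eps) by (intros t Ht; apply HXT0; lra).
  assert (HdX0 : forall t, t0 <= t -> is_derive X t (X t * ((m-1)*Y t - 2*X t))) by (intros t Ht; apply HdX; unfold a1 in *; lra).
  assert (HdY0 : forall t, t0 <= t -> is_derive Y t (-(Y t)^2 - b*Y t - X t - Nr * X t * Y t + X t * Z t)) by (intros t Ht; apply HdY; unfold a1 in *; lra).
  assert (HdZ0 : forall t, t0 <= t -> is_derive Z t (Z t * ((p-1)*Y t + sigma*X t))) by (intros t Ht; apply HdZ; unfold a1 in *; lra).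
  clear HdX HdY HdZ HY HXpos HZpos HY1 HXT0 HNX HXsmall.
  set (C := Rmax (- Y t0 / X t0) (2 / b) + 1).
  assert (HC1 : 2 / b + 1 <= C) by (unfold C; pose proof (Rmax_r (- Y t0 / X t0) (2 / b)); lra).
  assert (HCb : 2 + b <= C * b) by (assert (2 / b * b = 2) by (field; lra); nra).
  assert (HR : forall t, t0 <= t -> - Y t < C * X t).
  { intros t Ht.
    assert (Hx := HXp t Ht).
    cut (-1 * (Y t * / X t) < C).
    { intros H. assert (Y t * / X t * X t = Y t) by (field; lra). nra. }
    apply (barrier_dn (fun s => -1 * (Y s * / X s))
      (fun s => -1 * ((-(Y s)^2 - b*Y s - X s - Nr * X s * Y s + X s * Z s) * / X s
                     + Y s * (- (X s * ((m-1)*Y s - 2*X s)) / X s ^ 2))) t0 C); auto.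
    - intros s Hs. apply d_scal. apply (d_mult Y (fun s => / X s)). apply HdY0; auto.
      apply d_inv. apply HdX0; auto. assert (0 < X s) by auto. lra.
    - unfold C. pose proof (Rmax_l (- Y t0 / X t0) (2 / b)).
      assert (- Y t0 / X t0 = -1 * (Y t0 * / X t0)) by (unfold Rdiv; ring). lra.
    - intros s Hs Heq.
      assert (Hxs := HXp s ltac:(lra)). assert (Hzs := HZp s ltac:(lra)).
      assert (HYs : Y s = - C * X s).
      { assert (Y s = (Y s * / X s) * X s) by (field; lra). nra. }
      rewrite HYs.
      replace (-1 * ((- (- C * X s) ^ 2 - b * (- C * X s) - X s - Nr * X s * (- C * X s) + X s * Z s) * / X s +
          - C * X s * (- (X s * ((m - 1) * (- C * X s) - 2 * X s)) / X s ^ 2)))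
        with (- C * (b - m * (C * X s) - 2 * X s) + 1 - Nr * (C * X s) - Z s) by (field; lra).
      specialize (HYdel s ltac:(lra)). specialize (HXe s ltac:(lra)).
      assert (C * X s < del) by lra.
      assert (b - m * (C * X s) - 2 * X s > b / 2) by nra.
      assert (0 < C) by (pose proof (Rdiv_lt_0_compat 2 b ltac:(lra) Hb); lra).
      assert (0 <= Nr * (C * X s)) by (apply Rmult_le_pos; [lra|]; apply Rmult_le_pos; lra).
      nra. }
  set (c2 := (m - 1) * C + 2).
  assert (HC0 : 0 < C) by (pose proof (Rdiv_lt_0_compat 2 b ltac:(lra) Hb); lra).
  assert (Hc2 : 0 < c2) by (unfold c2; nra).
  assert (HinvX2 : forall t, t0 <= t -> / X t <= / X t0 + c2 * (t - t0)).
  { intros t Ht.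
    cut (c2 * t0 - / X t0 <= c2 * t - / X t); [lra|].
    apply (mono (fun s => c2 * s - / X s)
      (fun s => c2 * 1 - - (X s * ((m-1)*Y s - 2*X s)) / X s ^ 2) t0 t); auto.
    - intros s Hs. apply d_minus. apply d_scal, d_id. apply d_inv. apply HdX0; lra.
      assert (0 < X s) by (apply HXp; lra). lra.
    - intros s Hs. assert (Hx := HXp s ltac:(lra)). specialize (HR s ltac:(lra)).
      replace (c2 * 1 - - (X s * ((m-1)*Y s - 2*X s)) / X s ^ 2) with
        ((m-1) * (C * X s - - Y s) / X s) by (unfold c2; field; lra).
      apply Rmult_le_pos; [nra|]. left; apply Rinv_0_lt_compat; lra. }
  assert (HinvX1 : forall t, t0 <= t -> / X t0 + 2 * (t - t0) <= / X t) by (intros t Ht; apply HinvX; unfold a1 in *; lra).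
  set (x0 := / X t0).
  assert (Hx0 : 0 < x0) by (unfold x0; apply Rinv_0_lt_compat; apply HXp; lra).
  set (D := fun s => x0 + 2 * (s - t0)).
  assert (HDp : forall s, t0 <= s -> 0 < D s) by (intros; unfold D; lra).
  assert (HdD : forall s, is_derive D s 2) by (intros; unfold D; auto_derive; auto; ring).
  assert (HXD : forall s, t0 <= s -> X s <= / D s).
  { intros s Hs. assert (Hx := HXp s Hs). specialize (HinvX1 s Hs). specialize (HDp s Hs).
    assert (X s * / X s = 1) by (field; lra).
    assert (D s * / D s = 1) by (field; lra).
    assert (0 < / D s) by (apply Rinv_0_lt_compat; lra).
    assert (Hq1 : X s * D s <= X s * / X s) by (apply Rmult_le_compat_l; [lra| unfold D; cbv beta; unfold x0 in *; lra]).
    assert (Hq2 : X s * D s * / D s <= 1 * / D s) by (apply Rmult_le_compat_r; lra).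
    replace (X s * D s * / D s) with (X s) in Hq2 by (field; lra). lra. }
  assert (HXD2 : forall s, t0 <= s -> / (x0 + c2 * (s - t0)) <= X s).
  { intros s Hs. assert (Hx := HXp s Hs). specialize (HinvX2 s Hs).
    assert (0 < x0 + c2 * (s - t0)) by nra.
    assert (X s * / X s = 1) by (field; lra).
    assert ((x0 + c2 * (s - t0)) * / (x0 + c2 * (s - t0)) = 1) by (field; lra).
    assert (0 < / (x0 + c2 * (s - t0))) by (apply Rinv_0_lt_compat; lra).
    assert (Hq1 : X s * / X s <= X s * (x0 + c2 * (s - t0))) by (apply Rmult_le_compat_l; try unfold x0; lra).
    assert (Hq2 : 1 * / (x0 + c2 * (s - t0)) <= X s * (x0 + c2 * (s - t0)) * / (x0 + c2 * (s - t0)))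
      by (apply Rmult_le_compat_r; lra).
    replace (X s * (x0 + c2 * (s - t0)) * / (x0 + c2 * (s - t0))) with (X s) in Hq2 by (field; lra). lra. }
  set (k := (p - 1) / b).
  assert (Hk : 0 < k) by (unfold k; apply Rdiv_lt_0_compat; lra).
  set (Kc := k * (C^2 + Nr * C)).
  assert (HKc : 0 <= Kc) by (unfold Kc; apply Rmult_le_pos; nra).
  assert (HE : forall s, t0 <= s -> - Kc * (/ D s)^2 <= - k * Y s * (Y s + Nr * X s) <= Kc * (/ D s)^2).
  { intros s Hs. assert (Hx := HXp s Hs). specialize (HR s Hs). specialize (HXD s Hs).
    destruct (HYb s Hs) as [Y1 Y2].
    assert (Hu2 : (- Y s)^2 <= C^2 * X s ^2) by nra.
    assert (Hx2 : X s ^ 2 <= (/ D s)^2) by nra.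
    assert (HuX : Nr * X s * (- Y s) <= Nr * C * X s^2) by (assert (0 < Nr * X s) by nra; nra).
    assert (HE0 : - k * Y s * (Y s + Nr * X s) = k * (Nr * X s * (- Y s)) - k * (- Y s)^2) by ring.
    rewrite HE0.
    assert (Ha1 : k * (Nr * X s * (- Y s)) <= k * (Nr * C * (/ D s)^2)).
    { apply Rmult_le_compat_l; [lra|]. assert (0 <= Nr * C) by nra. nra. }
    assert (Ha2 : k * (- Y s)^2 <= k * (C^2 * (/ D s)^2)).
    { apply Rmult_le_compat_l; [lra|]. assert (0 <= C^2) by nra. nra. }
    assert (Ha3 : 0 <= k * (Nr * X s * (- Y s))) by (apply Rmult_le_pos; [lra|]; apply Rmult_le_pos; nra).
    assert (Ha4 : 0 <= k * (- Y s)^2) by (apply Rmult_le_pos; [lra|apply pow2_ge_0]).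
    unfold Kc. split; nra. }
  assert (HPhi : forall s, t0 <= s ->
     (Z s * ((p-1)*Y s + sigma*X s)) / Z s + k * (-(Y s)^2 - b*Y s - X s - Nr * X s * Y s + X s * Z s)
     = k * X s * (Z s - g0) + (- k * Y s * (Y s + Nr * X s))).
  { intros s Hs. assert (Hz := HZp s Hs). rewrite Hg0. unfold k.
    assert (Z s <> 0) by lra. assert (b <> 0) by lra. assert (p - 1 <> 0) by lra.
    field. auto. }
  set (Psip := fun s => ln (Z s) + k * Y s - Kc * / D s).
  set (dPsip := fun s => (Z s * ((p-1)*Y s + sigma*X s)) / Z s
        + k * (-(Y s)^2 - b*Y s - X s - Nr * X s * Y s + X s * Z s) - Kc * (- 2 / D s ^ 2)).
  assert (HdPsip : forall s, t0 <= s -> is_derive Psip s (dPsip s)).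
  { intros s Hs. apply (d_minus (fun s => ln (Z s) + k * Y s) (fun s => Kc * / D s)).
    apply d_plus. apply d_ln. apply HdZ0; auto. apply HZp; auto. apply d_scal, HdY0; auto.
    apply d_scal. apply (d_inv D). apply HdD. specialize (HDp s Hs); lra. }
  assert (HdPsipb : forall s, t0 <= s -> k * X s * (Z s - g0) <= dPsip s).
  { intros s Hs. unfold dPsip. rewrite HPhi by auto. specialize (HE s Hs). specialize (HDp s Hs).
    replace (Kc * (- 2 / D s ^ 2)) with (- (2 * Kc * (/ D s)^2)) by (field; lra).
    assert (0 <= Kc * (/ D s)^2) by (apply Rmult_le_pos; [lra|apply pow2_ge_0]). lra. }
  assert (HPsip_le : forall s, t0 <= s -> Psip s <= ln (Z s)).
  { intros s Hs. unfold Psip. destruct (HYb s Hs). specialize (HDp s Hs).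
    assert (0 <= Kc * / D s) by (apply Rmult_le_pos; [lra|left; apply Rinv_0_lt_compat; lra]). nra. }
  set (Psim := fun s => ln (Z s) + k * Y s + k * C * X s + Kc * / D s).
  set (dPsim := fun s => (Z s * ((p-1)*Y s + sigma*X s)) / Z s
        + k * (-(Y s)^2 - b*Y s - X s - Nr * X s * Y s + X s * Z s)
        + k * C * (X s * ((m-1)*Y s - 2*X s)) + Kc * (- 2 / D s ^ 2)).
  assert (HdPsim : forall s, t0 <= s -> is_derive Psim s (dPsim s)).
  { intros s Hs. apply (d_plus (fun s => ln (Z s) + k * Y s + k * C * X s) (fun s => Kc * / D s)).
    apply (d_plus (fun s => ln (Z s) + k * Y s) (fun s => k * C * X s)).
    apply d_plus. apply d_ln. apply HdZ0; auto. apply HZp; auto. apply d_scal, HdY0; auto.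
    apply d_scal, HdX0; auto.
    apply d_scal. apply (d_inv D). apply HdD. specialize (HDp s Hs); lra. }
  assert (HdPsimb : forall s, t0 <= s -> dPsim s <= k * X s * (Z s - g0)).
  { intros s Hs. unfold dPsim. rewrite HPhi by auto. specialize (HE s Hs). specialize (HDp s Hs).
    replace (Kc * (- 2 / D s ^ 2)) with (- (2 * Kc * (/ D s)^2)) by (field; lra).
    assert (0 <= Kc * (/ D s)^2) by (apply Rmult_le_pos; [lra|apply pow2_ge_0]).
    destruct (HYb s Hs). assert (Hx := HXp s Hs).
    assert (k * C * (X s * ((m-1)*Y s - 2*X s)) <= 0).
    { assert (0 < k * C * X s) by (apply Rmult_lt_0_compat; [apply Rmult_lt_0_compat|]; lra).
      assert ((m-1)*Y s - 2*X s < 0) by nra.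
      replace (k * C * (X s * ((m-1)*Y s - 2*X s))) with ((k * C * X s) * ((m-1)*Y s - 2*X s)) by ring.
      left; apply Rmult_pos_neg; lra. }
    lra. }
  assert (HPsim_ge : forall s, t0 <= s -> ln (Z s) <= Psim s).
  { intros s Hs. unfold Psim. specialize (HR s Hs). specialize (HDp s Hs).
    assert (0 <= Kc * / D s) by (apply Rmult_le_pos; [lra|left; apply Rinv_0_lt_compat; lra]). nra. }
  assert (HUp : forall t, t0 <= t -> Psip t <= ln g0).
  { intros t1 Ht1. destruct (Rle_lt_dec (Psip t1) (ln g0)) as [|Hgt]; auto. exfalso.
    set (cc := (Psip t1 + ln g0)/2).
    assert (Hbar : forall s, t1 <= s -> cc < Psip s).
    { apply (barrier Psip dPsip t1 cc).
      - intros s Hs; apply HdPsip; lra.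
      - unfold cc; lra.
      - intros s Hs Heq. specialize (HPsip_le s ltac:(lra)).
        assert (Hz : g0 < Z s). { apply ln_lt_inv; [lra | apply HZp; lra | unfold cc in *; lra]. }
        specialize (HdPsipb s ltac:(lra)).
        assert (0 < k * X s * (Z s - g0)) by (apply Rmult_lt_0_compat; [apply Rmult_lt_0_compat; [lra| apply HXp; lra] | lra]).
        lra. }
    set (rho := exp cc).
    assert (Hrho : g0 < rho). { unfold rho. rewrite <- (exp_ln g0) by lra. apply exp_increasing. unfold cc; lra. }
    assert (HZrho : forall s, t1 <= s -> rho < Z s).
    { intros s Hs. rewrite <- (exp_ln (Z s)) by (apply HZp; lra). apply exp_increasing.
      specialize (Hbar s Hs). specialize (HPsip_le s ltac:(lra)). lra. }
    destruct (unbounded_growth Psip dPsip t1 (x0 + c2*(t1 - t0)) c2 (k*(rho - g0))) with (B := ln M0)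
      as [T [HT1 HT]].
    - nra.
    - lra.
    - apply Rmult_lt_0_compat; lra.
    - intros s Hs; apply HdPsip; lra.
    - intros s Hs. replace (x0 + c2 * (t1 - t0) + c2 * (s - t1)) with (x0 + c2 * (s - t0)) by ring.
      specialize (HXD2 s ltac:(lra)). specialize (HZrho s Hs). specialize (HdPsipb s ltac:(lra)).
      assert (Hx := HXp s ltac:(lra)).
      unfold Rdiv. 
      assert (k * (rho - g0) * / (x0 + c2 * (s - t0)) <= k * (rho - g0) * X s)
        by (apply Rmult_le_compat_l; [apply Rmult_le_pos; lra|lra]).
      assert (k * (rho - g0) * X s <= k * X s * (Z s - g0)).
      { replace (k * X s * (Z s - g0)) with ((k * X s) * (Z s - g0)) by ring.
        replace (k * (rho - g0) * X s) with ((k * X s) * (rho - g0)) by ring.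
        apply Rmult_le_compat_l; [apply Rmult_le_pos; lra|lra]. }
      lra.
    - specialize (HT T (Rle_refl T)). specialize (HPsip_le T ltac:(lra)).
      assert (Hzt := HZp T ltac:(lra)). assert (HzM := HZb T ltac:(lra)).
      assert (ln (Z T) < ln M0) by (apply ln_increasing; lra). lra. }
  assert (HXlim : is_lim X p_infty 0).
  { apply (lim_inv_lin X 0 t0 x0 1); [lra|lra|]. intros t Ht.
    specialize (HXD t Ht). specialize (HDp t Ht). assert (Hx := HXp t Ht).
    rewrite Rminus_0_r, Rabs_right by lra.
    assert (X t * D t <= / D t * D t) by (apply Rmult_le_compat_r; lra).
    replace (/ D t * D t) with 1 in H by (field; lra). unfold D in H. exact H. }
  assert (HYlim : is_lim Y p_infty 0).
  { apply (lim_inv_lin Y 0 t0 x0 C); [lra|lra|]. intros t Ht.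
    specialize (HXD t Ht). specialize (HDp t Ht). assert (Hx := HXp t Ht). specialize (HR t Ht).
    destruct (HYb t Ht).
    rewrite Rminus_0_r, Rabs_left by lra.
    assert (- Y t * D t <= C * / D t * D t) by (apply Rmult_le_compat_r; nra).
    replace (C * / D t * D t) with C in H1 by (field; lra). unfold D in H1. exact H1. }
  destruct (classic (exists t1, t0 <= t1 /\ Psim t1 < ln g0)) as [[t1 [Ht1 Hlt]]|Hno].
  - left. split; [exact HXlim|]. split; [exact HYlim|].
    set (cc := (Psim t1 + ln g0)/2).
    assert (Hbar : forall s, t1 <= s -> Psim s < cc).
    { apply (barrier_dn Psim dPsim t1 cc).
      - intros s Hs; apply HdPsim; lra.
      - unfold cc; lra.
      - intros s Hs Heq. specialize (HPsim_ge s ltac:(lra)).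
        assert (Hz : Z s < g0). { apply ln_lt_inv; [apply HZp; lra | lra | unfold cc in *; lra]. }
        specialize (HdPsimb s ltac:(lra)).
        assert (0 < k * X s * (g0 - Z s)) by (apply Rmult_lt_0_compat; [apply Rmult_lt_0_compat; [lra| apply HXp; lra] | lra]).
        lra. }
    set (rho := exp cc).
    assert (Hrho : rho < g0). { unfold rho. rewrite <- (exp_ln g0) by lra. apply exp_increasing. unfold cc; lra. }
    assert (HZrho : forall s, t1 <= s -> Z s < rho).
    { intros s Hs. rewrite <- (exp_ln (Z s)) by (apply HZp; lra). apply exp_increasing.
      specialize (Hbar s Hs). specialize (HPsim_ge s ltac:(lra)). lra. }
    assert (HG := unbounded_growth (fun s => -1 * Psim s) (fun s => -1 * dPsim s) t1 (x0 + c2*(t1 - t0)) c2 (k*(g0 - rho))).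
    apply lim_of_bound. intros ep He.
    destruct (HG ltac:(nra) ltac:(lra) ltac:(apply Rmult_lt_0_compat; lra)) with (B := - ln ep) as [T [HT1 HT]].
    + intros s Hs. apply d_scal. apply HdPsim; lra.
    + intros s Hs. replace (x0 + c2 * (t1 - t0) + c2 * (s - t1)) with (x0 + c2 * (s - t0)) by ring.
      specialize (HXD2 s ltac:(lra)). specialize (HZrho s Hs). specialize (HdPsimb s ltac:(lra)).
      assert (Hx := HXp s ltac:(lra)).
      unfold Rdiv.
      assert (k * (g0 - rho) * / (x0 + c2 * (s - t0)) <= k * (g0 - rho) * X s)
        by (apply Rmult_le_compat_l; [apply Rmult_le_pos; lra|lra]).
      assert (k * (g0 - rho) * X s <= k * X s * (g0 - Z s)).
      { replace (k * X s * (g0 - Z s)) with ((k * X s) * (g0 - Z s)) by ring.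
        replace (k * (g0 - rho) * X s) with ((k * X s) * (g0 - rho)) by ring.
        apply Rmult_le_compat_l; [apply Rmult_le_pos; lra|lra]. }
      lra.
    + exists T. intros t Ht. specialize (HT t ltac:(lra)). specialize (HPsim_ge t ltac:(lra)).
      assert (Hz := HZp t ltac:(lra)).
      assert (Z t < ep) by (apply ln_lt_inv; lra).
      rewrite Rminus_0_r, Rabs_right by lra. lra.
  - right. split; [exact HXlim|]. split; [exact HYlim|].
    assert (Hge : forall t, t0 <= t -> ln g0 <= Psim t).
    { intros t Ht. destruct (Rle_lt_dec (ln g0) (Psim t)); auto. exfalso; apply Hno; eauto. }
    assert (HlnZ : is_lim (fun t => ln (Z t)) p_infty (ln g0)).
    { apply (lim_inv_lin (fun t => ln (Z t)) (ln g0) t0 x0 (k * C + Kc)); [lra| |].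
      { assert (0 <= k * C) by (apply Rmult_le_pos; lra). lra. }
      intros t Ht. specialize (Hge t Ht). specialize (HUp t Ht).
      specialize (HXD t Ht). specialize (HDp t Ht). assert (Hx := HXp t Ht). specialize (HR t Ht).
      destruct (HYb t Ht). unfold Psim, Psip in *.
      assert (Hw : 0 < / D t) by (apply Rinv_0_lt_compat; lra).
      assert (Habs : Rabs (ln (Z t) - ln g0) <= k * C * X t + Kc * / D t).
      { apply Rabs_le. assert (0 < k * (- Y t)) by (apply Rmult_lt_0_compat; lra).
        assert (k * (- Y t) < k * (C * X t)) by (apply Rmult_lt_compat_l; lra). nra. }
      change (x0 + 2 * (t - t0)) with (D t).
      assert (Habs2 : Rabs (ln (Z t) - ln g0) * D t <= (k * C * X t + Kc * / D t) * D t)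
        by (apply Rmult_le_compat_r; lra).
      replace ((k * C * X t + Kc * / D t) * D t) with (k * C * (X t * D t) + Kc) in Habs2 by (field; lra).
      assert (X t * D t <= / D t * D t) by (apply Rmult_le_compat_r; lra).
      replace (/ D t * D t) with 1 in H1 by (field; lra).
      assert (k * C * (X t * D t) <= k * C * 1) by (apply Rmult_le_compat_l; [apply Rmult_le_pos|]; lra).
      lra. }
    assert (Hc := is_lim_comp_continuous (fun t => ln (Z t)) exp p_infty (ln g0) HlnZ
                    (ex_derive_continuous exp (ln g0) (ex_intro _ _ (is_derive_exp _)))).
    rewrite exp_ln in Hc by lra.
    apply (is_lim_ext_loc (fun t => exp (ln (Z t))) Z); auto.
    exists t0. intros t Ht. apply exp_ln, HZp; lra.
Qed.

Theorem lemma5p1 (N : nat) (m sigma p : R)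
  (HN : (1 <= N)%nat) (Hm : 1 < m) (Hsigma : 0 < sigma) (Hp : m < p)
  (HpF : pF N m sigma <= p) :
  (forall (X Y Z : R -> R) (eta_s : R),
     S1_solution_from N m sigma p X Y Z eta_s ->
     0 < X eta_s -> 0 < Z eta_s ->
     (forall eta, eta_s < eta ->
        - (beta m sigma p / alpha m sigma p) < Y eta /\ Y eta < 0) ->
     converges_to X Y Z 0 0 0 \/ converges_to X Y Z 0 0 (gamma0 m sigma p))
  /\
  (forall x z, 0 < x -> 0 < z ->
     0 < S1_Y N m sigma p x (- (beta m sigma p / alpha m sigma p)) z).
Proof.
  assert (HL : 0 < Lpar m sigma p) by (unfold Lpar; nra).
  assert (Hba : beta m sigma p / alpha m sigma p = (p - m) / (sigma + 2)).
  { unfold beta, alpha. field. split; lra. }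
  set (b := (p - m) / (sigma + 2)) in *.
  assert (Hb : 0 < b) by (unfold b; apply Rdiv_lt_0_compat; lra).
  assert (HNr : 1 <= INR N) by (replace 1 with (INR 1) by reflexivity; apply le_INR; exact HN).
  assert (HNb : 1 <= INR N * b).
  { unfold pF in HpF. unfold b.
    assert ((sigma + 2) / INR N <= p - m) by lra.
    assert ((sigma + 2) / INR N * INR N = sigma + 2) by (field; lra).
    assert (INR N * ((p - m) / (sigma + 2)) * (sigma + 2) = INR N * (p - m)) by (field; lra).
    nra. }
  split.
  - intros X Y Z a Hsol HX0 HZ0 HY.
    assert (Hg : gamma0 m sigma p = 1 - sigma * b / (p - 1)).
    { unfold gamma0, alpha, b, Lpar. unfold Lpar in HL. field. repeat split; try lra; nra. }
    assert (Hgp : 0 < 1 - sigma * b / (p - 1)).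
    { unfold b. assert (sigma * ((p - m) / (sigma + 2)) / (p - 1) < 1); [|lra].
      replace (sigma * ((p - m) / (sigma + 2)) / (p - 1)) with (sigma * (p - m) / ((sigma + 2) * (p - 1))) by (field; split; lra). apply Rlt_div_l; nra. }
    unfold converges_to. rewrite Hg.
    apply (main1 N m sigma p b (1 - sigma * b / (p - 1)) X Y Z a); auto; try lra.
    + intros t Ht. destruct (Hsol t Ht) as [H1 _]. exact H1.
    + intros t Ht. destruct (Hsol t Ht) as [_ [H1 _]]. unfold S1_Y in H1. exact H1.
    + intros t Ht. destruct (Hsol t Ht) as [_ [_ H1]]. exact H1.
    + intros t Ht. rewrite <- Hba. auto.
  - intros x z Hx Hz. rewrite Hba. unfold S1_Y. fold b.
    replace (- (- b) ^ 2 - b * - b - x - INR N * x * - b + x * z) with (x * (INR N * b - 1 + z)) by ring.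
    apply Rmult_lt_0_compat; lra.
Qed.
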